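(* Let $s,t,\ell,m$ be integers with $1\le t\le \ell \le m$ and $1 \le s \le t$. Then $\mathfrak{w}_{\ell}^{(s)}(t;\ell,m)=0$ if $s \ne t$, while $$\mathfrak{w}_{\ell}^{(t)}(t;\ell,m) = \mathfrak{w}_{\ell}(t;\ell,m) = \frac{q-1}{q}\left(\mu_t(\ell,m) - (-1)^t q^{\binom{t}{2}}{\ell\brack t}_q \right).$$
   Context: $q$ is a prime power. $\mu_t(\ell,m)$ is the number of $\ell\times m$ matrices over $\mathbb{F}_q$ of rank exactly $t$. For an $\ell\times m$ matrix $M=(m_{ij})$ and $1\le r\le\ell$, $\tau_r(M)=m_{11}+\cdots+m_{rr}$ and $\underline{M}_r$ is the matrix of its first $r$ rows. $\mathfrak w_r(t;\ell,m)$ is the number of $\ell\times m$ matrices $M$ over $\mathbb{F}_q$ with $\mathrm{rk}(M)=t$ and $\tau_r(M)\ne0$, and $\mathfrak w^{(s)}_r(t;\ell,m)$ is the number of those that additionally satisfy $\mathrm{rk}(\underline{M}_r)=s$. ${n\brack k}_q$ is the Gaussian binomial coefficient. *)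

(* Defs.v *)
From HB Require Import structures.
From mathcomp Require Import all_boot all_order all_algebra.
Set Implicit Arguments. Unset Strict Implicit. Unset Printing Implicit Defensive.
Import GRing.Theory Num.Theory.

(* tau_r(M) = m_11 + ... + m_rr : sum of the diagonal entries (i,i) with i < r *)
Definition tau (F : fieldType) (l m : nat) (r : nat) (M : 'M[F]_(l, m)) : F :=
  (\sum_(i < l) \sum_(j < m | (nat_of_ord i == nat_of_ord j) && (i < r)%N) M i j)%R.

(* underline M_r : the matrix of the first r rows of M (r <= l assumed) *)
Definition first_rows (F : fieldType) (l m : nat) (r : nat) (M : 'M[F]_(l, m))
  : 'M[F]_(minn r l, m) :=
  rowsub (widen_ord (geq_minr r l)) M.

Definition mu (F : finFieldType) (t l m : nat) : nat :=
  #|[set M : 'M[F]_(l, m) | \rank M == t]|.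

Definition w (F : finFieldType) (r t l m : nat) : nat :=
  #|[set M : 'M[F]_(l, m) | (\rank M == t) && (tau r M != 0%R)]|.

Definition ws (F : finFieldType) (r s t l m : nat) : nat :=
  #|[set M : 'M[F]_(l, m) | [&& \rank M == t, tau r M != 0%R
                             & \rank (first_rows r M) == s]]|.

Definition gauss_binom (q n k : nat) : rat :=
  if (k <= n)%N then
    (\prod_(i < k) (((q ^ (n - i))%:R - 1) / ((q ^ i.+1)%:R - 1)))%R
  else 0%R.

(* Main.v *)
From HB Require Import structures.
From mathcomp Require Import all_boot all_order all_algebra.
Require Import Defs.
From mathcomp Require Import ring.
Import GRing.Theory Num.Theory.
Set Implicit Arguments. Unset Strict Implicit. Unset Printing Implicit Defensive.
Local Open Scope ring_scope.

Definition NumQ (q n k : nat) : rat := \prod_(i < k) ((q ^ (n - i))%:R - 1).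
Definition Den (q k : nat) : rat := \prod_(i < k) ((q ^ i.+1)%:R - 1).

Lemma gbE q n k : (k <= n)%N -> gauss_binom q n k = NumQ q n k / Den q k.
Proof.
move=> kn; rewrite /gauss_binom kn /NumQ /Den big_split /= prodfV //.
Qed.

Lemma qpow_neq1 q k : (1 < q)%N -> ((q ^ k.+1)%:R - 1 : rat) != 0.
Proof.
move=> q1; rewrite subr_eq0 pnatr_eq1.
have := ltn_exp2l 0 k.+1 q1; rewrite expn0 => h.
by rewrite gtn_eqF.
Qed.

Lemma Den_neq0 q k : (1 < q)%N -> Den q k != 0.
Proof. by move=> q1; rewrite /Den prodf_seq_neq0; apply/allP => i _ /=; apply: qpow_neq1. Qed.

Lemma fld1 (N D X : rat) : X != 0 -> D != 0 -> X * N / (D * X) = N / D.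
Proof. by move=> h1 h2; field; rewrite h1 h2. Qed.
Lemma fld2 (N D A B : rat) : B - 1 != 0 -> D != 0 ->
  (B * A - 1) * N / (D * (B - 1)) = N / D + B * (N * (A - 1) / (D * (B - 1))).
Proof. by move=> h1 h2; field; rewrite h1 h2. Qed.

Lemma gb_pascal q l t : (1 < q)%N ->
  gauss_binom q l.+1 t.+1 = gauss_binom q l t + (q%:R)^+t.+1 * gauss_binom q l t.+1.
Proof.
move=> q1.
have [tl|] := leqP t l; last first.
  move=> lt; rewrite /gauss_binom ltnS.
  rewrite (leqNgt t l) lt /= (leqNgt t.+1 l) (ltn_trans lt) //.
  by rewrite mulr0 addr0.
have NL : NumQ q l.+1 t.+1 = ((q ^ l.+1)%:R - 1) * NumQ q l t.
  by rewrite /NumQ big_ord_recl subn0; congr (_ * _); apply: eq_bigr => i _.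
have DR : Den q t.+1 = Den q t * ((q ^ t.+1)%:R - 1) by rewrite /Den big_ord_recr.
have D0 := Den_neq0 t q1.
have B0 := qpow_neq1 t q1.
rewrite gbE // gbE // NL DR.
move: tl; rewrite leq_eqVlt => /orP[/eqP tl|tl].
  subst t; rewrite /gauss_binom ltnn mulr0 addr0.
  exact: fld1.
have NR : NumQ q l t.+1 = NumQ q l t * ((q ^ (l - t))%:R - 1) by rewrite /NumQ big_ord_recr.
rewrite gbE // NR.
have E : (q ^ l.+1)%:R = (q ^ t.+1)%:R * (q ^ (l - t))%:R :> rat.
  by rewrite -natrM -expnD addSn subnKC // ltnW.
rewrite E -natrX.

rewrite DR; exact: fld2.
Qed.

Definition Pq (q l t : nat) : rat := (-1) ^+ t * (q%:R) ^+ 'C(t, 2) * gauss_binom q l t.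

Lemma Pq0 q l : Pq q l 0 = 1.
Proof. by rewrite /Pq /gauss_binom leq0n big_ord0 !mulr1. Qed.

Lemma Pq_0 q t : Pq q 0 t.+1 = 0.
Proof. by rewrite /Pq /gauss_binom ltn0 mulr0. Qed.

Lemma rg1 (c g1 g2 : rat) (t b : nat) :
  (-1) ^+ t.+1 * c ^+ (b + t) * (g1 + c ^+ t.+1 * g2) =
  c ^+ t.+1 * ((-1) ^+ t.+1 * c ^+ (b + t) * g2) - c ^+ t * ((-1) ^+ t * c ^+ b * g1).
Proof. rewrite !exprS !exprD; ring. Qed.

Lemma Pq_rec q l t : (1 < q)%N ->
  Pq q l.+1 t.+1 = (q%:R) ^+ t.+1 * Pq q l t.+1 - (q%:R) ^+ t * Pq q l t.
Proof.
move=> q1; rewrite /Pq gb_pascal // binS bin1.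
exact: (rg1 (q%:R) (gauss_binom q l t) (gauss_binom q l t.+1) t (binomial t 2)).
Qed.
Definition dl (F : fieldType) (x : F) : rat := (x == 0)%:R - (x == 1)%:R.

Lemma sum_dl_shift (F : finFieldType) (n : nat) (V : pred 'rV[F]_n)
  (j : 'I_n) (v0 : 'rV[F]_n) (a : F) :
  (forall u v, V u -> V v -> V (u + v)) -> (forall c v, V v -> V (c *: v)) ->
  V v0 -> v0 0 j != 0 ->
  \sum_(x | V x) dl (a + x 0 j) = 0.
Proof.
move=> VD VZ Vv0 nz.
set v := (v0 0 j)^-1 *: v0.
have Vv : V v by apply: VZ.
have vj : v 0 j = 1 by rewrite mxE mulVf.
have Vnv : V (- v) by rewrite -scaleN1r; apply: VZ.
rewrite /dl sumrB; apply/eqP; rewrite subr_eq0; apply/eqP.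
rewrite (reindex_inj (addrI (- v))) /=.
apply: eq_big => x.
  apply/idP/idP => Hx; last by apply: VD.
  by have := VD _ _ Vv Hx; rewrite addNKr.
move=> _; rewrite mxE mxE vj addrCA.
by rewrite -[in RHS](subr_eq0 _ 1) addrC.
Qed.

Lemma card_rowspace (F : finFieldType) (m n : nat) (A : 'M[F]_(m, n)) :
  #|[pred x : 'rV[F]_n | (x <= A)%MS]| = (#|F| ^ \rank A)%N.
Proof.
have inj : injective (fun y : 'rV[F]_(\rank A) => y *m row_base A).
  exact: row_free_inj (row_base_free A).
transitivity #|{: 'rV[F]_(\rank A)}|; last by rewrite card_mx mul1n.
rewrite -(card_codom inj).
apply: eq_card => x; rewrite inE.
rewrite -(eq_row_base A).
apply/submxP/codomP => [[D ->]|[D ->]]; by exists D.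
Qed.

Lemma rank_col_row (F : fieldType) (l m : nat) (r : 'rV[F]_m) (N : 'M[F]_(l, m)) :
  \rank (col_mx r N) = (\rank N + ~~ (r <= N)%MS)%N.
Proof.
rewrite -addsmxE.
have [rN|nrN] := boolP (r <= N)%MS.
  by rewrite (addsmx_idPr rN).1 addn0.
have lt := ltn_leqif (mxrank_leqif_sup (addsmxSr r N)).
rewrite addsmx_sub submx_refl andbT (negbTE nrN) /= in lt.
have ub := (mxrank_adds_leqif r N).1.
have r1 := rank_leq_row r.
rewrite addn1; apply/eqP; rewrite eqn_leq lt andbT.
apply: (leq_trans ub); by rewrite addnC -(addn1 (\rank N)) leq_add2l.
Qed.

Definition zc (F : fieldType) (l m : nat) (S : {set 'I_m}) (N : 'M[F]_(l, m)) : bool :=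
  [forall i, forall k, (k \in S) ==> (N i k == 0)].
Definition trf (F : fieldType) (l m : nat) (f : 'I_l -> 'I_m) (N : 'M[F]_(l, m)) : F :=
  \sum_i N i (f i).
Definition Dsum (F : finFieldType) (l m : nat) (S : {set 'I_m}) (f : 'I_l -> 'I_m) (t : nat) : rat :=
  \sum_(N : 'M[F]_(l, m) | (\rank N == t) && zc S N) dl (trf f N).

Lemma zcP (F : fieldType) (l m : nat) (S : {set 'I_m}) (N : 'M[F]_(l, m)) :
  reflect (forall i k, k \in S -> N i k = 0) (zc S N).
Proof.
apply: (iffP forallP) => [H i k kS|H i].
  by move/forallP: (H i) => /(_ k) /implyP /(_ kS) /eqP.
by apply/forallP => k; apply/implyP => kS; rewrite H.
Qed.

Lemma zc_col (F : fieldType) l m S (r : 'rV[F]_m) (N : 'M[F]_(l,m)) :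
  zc S (col_mx r N) = zc S r && zc S N.
Proof.
apply/zcP/andP => [H|[/zcP Hr /zcP HN]].
  split; apply/zcP => i k kS.
    by have := H (lshift l i) k kS; rewrite col_mxEu.
  by have := H (rshift 1 i) k kS; rewrite col_mxEd.
move=> i k kS; rewrite -[i]splitK; case: (split i) => i0 /=.
  by rewrite col_mxEu Hr.
by rewrite col_mxEd HN.
Qed.

Lemma trf_col (F : fieldType) l m (f : 'I_(1 + l) -> 'I_m) (r : 'rV[F]_m) (N : 'M[F]_(l,m)) :
  trf f (col_mx r N) = r 0 (f (lshift l ord0)) + trf (fun i => f (rshift 1 i)) N.
Proof.
rewrite /trf big_split_ord big_ord1 col_mxEu; congr (_ + _).
by apply: eq_bigr => i _; rewrite col_mxEd.
Qed.

Lemma sub_entry0 (F : fieldType) l m (r : 'rV[F]_m) (N : 'M[F]_(l,m)) k :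
  (r <= N)%MS -> (forall i, N i k = 0) -> r 0 k = 0.
Proof.
move=> /submxP[D ->] H; rewrite mxE; apply: big1 => i _.
by rewrite H mulr0.
Qed.

Lemma sub_zc (F : fieldType) l m S (r : 'rV[F]_m) (N : 'M[F]_(l,m)) :
  zc S N -> (r <= N)%MS -> zc S r.
Proof.
move=> /zcP H rN; apply/zcP => i k kS; rewrite (ord1 i).
by apply: (sub_entry0 rN) => i'; apply: H.
Qed.

Lemma sum_rowspace (F : finFieldType) l m (N : 'M[F]_(l,m)) j a :
  \sum_(r : 'rV[F]_m | (r <= N)%MS) dl (a + r 0 j) =
  if [forall i, N i j == 0] then (#|F| ^ \rank N)%:R * dl a else 0.
Proof.
case: ifP => [/forallP H | /negbT].
  rewrite (eq_bigr (fun _ => dl a)) => [|r rN]; last first.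
    by rewrite (sub_entry0 rN) ?addr0 // => i; apply/eqP.
  rewrite sumr_const mulr_natl -(card_rowspace N) //.
rewrite negb_forall => /existsP[i Hi].
apply: (@sum_dl_shift _ _ _ _ (row i N)).
- by move=> u v; apply: addmx_sub.
- by move=> c v; apply: scalemx_sub.
- exact: row_sub.
- by rewrite mxE.
Qed.

Lemma sum_zc (F : finFieldType) m (S : {set 'I_m}) j a :
  j \notin S -> \sum_(r : 'rV[F]_m | zc S r) dl (a + r 0 j) = 0.
Proof.
move=> jS.
apply: (@sum_dl_shift _ _ _ _ (delta_mx 0 j)).
- move=> u v /zcP Hu /zcP Hv; apply/zcP => i k kS.
  by rewrite mxE Hu // Hv // addr0.
- move=> c v /zcP Hv; apply/zcP => i k kS.
  by rewrite mxE Hv // mulr0.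
- apply/zcP => i k kS; rewrite mxE.
  case: (k =P j) => [ek|]; last by rewrite andbF.
  by rewrite -ek kS in jS.
- by rewrite mxE !eqxx oner_eq0.
Qed.

Lemma inner_sum (F : finFieldType) l m (S : {set 'I_m}) (N : 'M[F]_(l,m)) (j : 'I_m) (a : F) (t : nat) :
  j \notin S -> zc S N ->
  \sum_(r : 'rV[F]_m | (\rank N + ~~ (r <= N)%MS == t)%N && zc S r) dl (a + r 0 j) =
  (if (\rank N == t) && [forall i, N i j == 0] then (#|F| ^ t)%:R * dl a else 0) -
  (if t is t'.+1 then
     (if (\rank N == t') && [forall i, N i j == 0] then (#|F| ^ t')%:R * dl a else 0)
   else 0).
Proof.
move=> jS zN.
have [kt|kt] := eqVneq (\rank N) t.
  rewrite (eq_bigl (fun r => (r <= N)%MS)) => [|r]; last first.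
    case rN: (r <= N)%MS; rewrite /= ?addn0 ?addn1 kt ?eqxx /=.
      exact: sub_zc rN.
    by rewrite eqn_leq ltnn.
  rewrite sum_rowspace /= kt.
  case: t {kt} => [|t]; first by rewrite subr0.
  by rewrite eqn_leq ltnn /= subr0.
have [kt1|kt1] := eqVneq (\rank N).+1 t.
  subst t; rewrite eqxx /=.
  rewrite (eq_bigl (fun r => zc S r && ~~ (r <= N)%MS)) => [|r]; last first.
    by case rN: (r <= N)%MS; rewrite /= ?addn0 ?addn1 ?eqxx ?(negbTE kt) ?andbT ?andbF.
  have := @sum_zc F m S j a jS; rewrite (bigID (fun r => (r <= N)%MS)) /=.
  rewrite (eq_bigl (fun r => (r <= N)%MS)) => [|r]; last first.
    by case rN: (r <= N)%MS; rewrite ?andbT ?andbF //; apply: sub_zc rN.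
  rewrite sum_rowspace => /eqP; rewrite addrC addr_eq0 => /eqP ->.
  by rewrite sub0r; case: ifP => //; rewrite oppr0.
rewrite big_pred0 => [|r]; last first.
  apply/andP => -[/eqP e _]; move: e.
  case: (r <= N)%MS => /= e.
    by move/eqP: kt; apply; rewrite -e; exact: (esym (addn0 _)).
  by move/eqP: kt1; apply; rewrite -e; exact: (esym (addn1 _)).
rewrite /=.
case: t kt kt1 => [|t] kt kt1; first by rewrite subr0.
by move: kt1; rewrite eqSS => /negbTE ->; rewrite subr0.
Qed.

Lemma sum_col (F : finFieldType) l m (G : 'M[F]_(1 + l, m) -> rat) :
  \sum_M G M = \sum_(N : 'M[F]_(l, m)) \sum_(r : 'rV[F]_m) G (col_mx r N).
Proof.
rewrite pair_bigA /=.
rewrite (reindex (fun p : 'M[F]_(l, m) * 'rV[F]_m => col_mx p.2 p.1)) /=; first by [].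
exists (fun M => (dsubmx M, usubmx M)) => [[N r] _|M _] /=.
  by rewrite col_mxKd col_mxKu.
by rewrite vsubmxK.
Qed.

Lemma zcU (F : fieldType) l m (S : {set 'I_m}) j (N : 'M[F]_(l, m)) :
  zc (j |: S) N = zc S N && [forall i, N i j == 0].
Proof.
apply/zcP/andP => [H|[/zcP H1 /forallP H2] i k].
  split; first by apply/zcP => i k kS; apply: H; rewrite in_setU1 kS orbT.
  by apply/forallP => i; rewrite H // setU11.
by rewrite in_setU1 => /orP[/eqP ->|kS]; [apply/eqP | apply: H1].
Qed.

Lemma sum_if_mul (T : finType) (c : rat) (P : pred T) (x : T -> rat) :
  \sum_(N : T) (if P N then c * x N else 0) = c * \sum_(N | P N) x N.
Proof.
by rewrite mulr_sumr [RHS]big_mkcond. Qed.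

Lemma Dsum_step (F : finFieldType) l m (S : {set 'I_m}) (f : 'I_(1 + l) -> 'I_m) t :
  f (lshift l ord0) \notin S ->
  Dsum F S f t =
    (#|F| ^ t)%:R * Dsum F (f (lshift l ord0) |: S) (fun i => f (rshift 1 i)) t
    - (if t is t'.+1 then
         (#|F| ^ t')%:R * Dsum F (f (lshift l ord0) |: S) (fun i => f (rshift 1 i)) t'
       else 0).
Proof.
set j := f (lshift l ord0); set f' := fun i => f (rshift 1 i); move=> jS.
rewrite /Dsum big_mkcond sum_col.
transitivity (\sum_(N : 'M[F]_(l, m))
   ((if (\rank N == t) && zc (j |: S) N then (#|F| ^ t)%:R * dl (trf f' N) else 0)
   - (if t is t'.+1 then
       (if (\rank N == t') && zc (j |: S) N then (#|F| ^ t')%:R * dl (trf f' N) else 0)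
      else 0))).
  apply: eq_bigr => N _.
  case zN: (zc S N).
    rewrite zcU zN /= -(@inner_sum F l m S N j (trf f' N) t jS zN) [RHS]big_mkcond /=.
    apply: eq_bigr => r _.
    by rewrite rank_col_row zc_col zN andbT trf_col addrC.
  rewrite big1; last by move=> r _; rewrite zc_col zN !andbF.
  by rewrite zcU zN /= andbF; case: t => [|t]; rewrite /= ?andbF subrr.
rewrite sumrB sum_if_mul; congr (_ - _).
case: t => [|t]; first by rewrite big1.
by rewrite sum_if_mul.
Qed.

Lemma Dsum_P (F : finFieldType) l : forall m (S : {set 'I_m}) (f : 'I_l -> 'I_m),
  injective f -> (forall i, f i \notin S) -> forall t, Dsum F S f t = Pq #|F| l t.
Proof.
elim: l => [|l IH] m S f finj fS t.
  rewrite /Dsum (eq_bigl (fun N => (N == 0) && (t == 0%N))) => [|N]; last first.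
    rewrite (flatmx0 N) mxrank0 eqxx /= eq_sym.
    by case: (t == 0%N) => //=; apply/zcP => i; case: i.
  case: t => [|t].
    rewrite (eq_bigl (pred1 0)) => [|N]; last by rewrite andbT.
    by rewrite big_pred1_eq /trf big_ord0 /dl eqxx [0 == 1]eq_sym oner_eq0 subr0 Pq0.
  by rewrite big1 ?Pq_0 // => N /andP[].
have q1 : (1 < #|F|)%N := card_finNzRing_gt1 F.
pose f1 : 'I_(1 + l) -> 'I_m := f.
have f1S : f1 (lshift l ord0) \notin S by apply: fS.
have -> : Dsum F S f t = Dsum F S f1 t by [].
rewrite (@Dsum_step F l m S f1 t f1S).
set j := f1 (lshift l ord0); set f' := fun i => f1 (rshift 1 i).
have f'inj : injective f' by move=> x y /finj /(congr1 val) /= /eqP; rewrite eqn_add2l => /eqP /val_inj.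
have f'S : forall i, f' i \notin j |: S.
  move=> i; rewrite in_setU1 negb_or fS andbT.
  apply/eqP => /finj /(congr1 val) /=; rewrite add1n //.
rewrite !IH //.
case: t => [|t]; first by rewrite !Pq0 expn0 mulr1 subr0.
by rewrite Pq_rec // IH // -!natrX.
Qed.

Lemma card_sum (T : finType) (P : pred T) :
  (#|[set x | P x]|%:R : rat) = \sum_x (P x)%:R.
Proof.
rewrite -sum1_card natr_sum [LHS]big_mkcond /=; apply: eq_bigr => x _.
by rewrite inE; case: (P x).
Qed.

Lemma rank_first_rows (F : fieldType) l m (M : 'M[F]_(l,m)) :
  \rank (first_rows l M) = \rank M.
Proof.
apply/eqP; rewrite eqn_leq mxrankS ?rowsub_sub //=.
apply: mxrankS; apply/row_subP => i.
have ii : (i < minn l l)%N by rewrite minnn ltn_ord.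
have -> : row i M = row (Ordinal ii) (first_rows l M).
  by rewrite /first_rows row_rowsub; congr row; apply: val_inj.
exact: row_sub.
Qed.

Lemma tau_trf (F : fieldType) l m (lm : (l <= m)%N) (M : 'M[F]_(l,m)) :
  tau l M = trf (fun i => widen_ord lm i) M.
Proof.
rewrite /tau /trf; apply: eq_bigr => i _.
rewrite (big_pred1 (widen_ord lm i)) // => j.
by rewrite ltn_ord andbT eq_sym.
Qed.

Lemma tau_scale (F : fieldType) l m (c : F) (M : 'M[F]_(l,m)) :
  tau l (c *: M) = c * tau l M.
Proof.
rewrite /tau mulr_sumr; apply: eq_bigr => i _; rewrite mulr_sumr.
by apply: eq_bigr => j _; rewrite mxE.
Qed.

Lemma field_final (q w N0 N1 : rat) : q != 0 -> q - 1 != 0 ->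
  w = (q - 1) * N1 -> w = (q - 1) / q * (N0 + w - (N0 - N1)).
Proof. by move=> h1 h2 ->; field; rewrite h1. Qed.
Lemma field_final2 (X q w N0 N1 : rat) : X = N0 - N1 -> q != 0 -> q - 1 != 0 ->
  w = (q - 1) * N1 -> w = (q - 1) / q * (N0 + w - X).
Proof. by move=> ->; apply: field_final. Qed.
Lemma field_final3 (M X q w N0 N1 : rat) : M = N0 + w -> X = N0 - N1 -> q != 0 -> q - 1 != 0 ->
  w = (q - 1) * N1 -> w = (q - 1) / q * (M - X).
Proof. by move=> ->; apply: field_final2. Qed.

Theorem mainTheorem15 (F : finFieldType) (s t l m : nat) :
  (1 <= t)%N -> (t <= l)%N -> (l <= m)%N -> (1 <= s)%N -> (s <= t)%N ->
  (s != t -> ws F l s t l m = 0%N) /\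
  ws F l t t l m = w F l t l m /\
  ((w F l t l m)%:R : rat) =
    ((#|F|%:R - 1) / #|F|%:R) *
    ((mu F t l m)%:R - (-1) ^+ t * (#|F|%:R) ^+ 'C(t, 2) * gauss_binom #|F| l t).
Proof.
move=> t1 tl lm s1 st.
split.
  move=> nst; rewrite /ws; apply: eq_card0 => M; rewrite !inE rank_first_rows.
  by case: eqP => [->|] //=; rewrite [t == s]eq_sym (negbTE nst) !andbF.
split.
  rewrite /ws /w; apply: eq_card => M; rewrite !inE rank_first_rows.
  by case: (\rank M == t); rewrite ?andbT.
have q1 : (1 < #|F|)%N := card_finNzRing_gt1 F.
pose Nf (c : F) : rat := \sum_(M : 'M[F]_(l, m)) ((\rank M == t) && (tau l M == c))%:R.
have HD : Pq #|F| l t = Nf 0 - Nf 1.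
  have := @Dsum_P F l m set0 (fun i => widen_ord lm i) _ _ t.
  rewrite /Dsum => <-; last first.
  - by move=> i; rewrite inE.
  - by move=> x y /(congr1 val) /= /val_inj.
  rewrite /Nf -sumrB big_mkcond /=; apply: eq_bigr => M _.
  have -> : zc set0 M by apply/zcP => i k; rewrite inE.
  rewrite andbT -tau_trf /dl.
  by case: (\rank M == t); rewrite /= ?subrr.
have Hmu : (mu F t l m)%:R = Nf 0 + (w F l t l m)%:R.
  rewrite /mu /w !card_sum /Nf -big_split /=; apply: eq_bigr => M _.
  by case: (\rank M == t); case: (tau l M == 0); rewrite /= ?add0r ?addr0.
have HN : forall c, c != 0 -> Nf c = Nf 1.
  move=> c cnz; rewrite /Nf (reindex_inj (scalerI cnz)) /=.
  apply: eq_bigr => M _; rewrite mxrank_scale_nz // tau_scale.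
  by rewrite -[X in _ * _ == X]mulr1 (inj_eq (mulfI cnz)).
have Hw : (w F l t l m)%:R = (#|F|%:R - 1) * Nf 1.
  rewrite /w card_sum.
  transitivity (\sum_(c : F | c != 0) Nf c).
    rewrite /Nf exchange_big /=; apply: eq_bigr => M _.
    case tz: (tau l M == 0).
      rewrite andbF big1 // => c cnz.
      by move/eqP: tz => ->; rewrite [0 == c]eq_sym (negbTE cnz) andbF.
    rewrite (bigD1 (tau l M)) /=; last by rewrite tz.
    rewrite eqxx andbT big1 ?addr0 // => c /andP[_ nc].
    by rewrite [tau l M == c]eq_sym (negbTE nc) andbF.
  rewrite (eq_bigr (fun _ => Nf 1)) => [|c]; last exact: HN.
  rewrite sumr_const.
  have -> : #|(fun i : F => i != 0)| = #|F|.-1 by rewrite -(cardC1 (0 : F)); apply: eq_card.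
  by rewrite -subn1 mulrnBr ?(ltnW q1) // mulrBl mul1r mulr_natl mulr1n.
apply: (field_final3 (q := #|F|%:R) Hmu HD); last exact: Hw.
- by rewrite pnatr_eq0 -lt0n ltnW.
- by rewrite subr_eq0 pnatr_eq1 gtn_eqF.
Qed.
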